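(* After any non-terminal history at which the chair has not (at any earlier history along it) missed an opportunity or taken a risk, there is a pair of distinct alternatives unranked by the current proto-ranking which can be offered without missing an opportunity or taking a risk.
   Context: Let $\mathcal{X}$ be a finite set of alternatives. A proto-ranking is an irreflexive and transitive binary relation on $\mathcal{X}$; a ranking is a total proto-ranking; a tournament is a total and asymmetric relation on $\mathcal{X}$. The chair has a fixed preference $\succ$, a ranking on $\mathcal{X}$. Interaction: starting from $R_0=\varnothing$, in each period $t\geq1$ with $R_{t-1}$ not total the chair offers a pair $\{x,y\}$ unranked by $R_{t-1}$, one of them wins, and $R_t$ is the transitive closure of $R_{t-1}\cup\{(\text{winner},\text{loser})\}$. A history is a finite sequence of (winner, loser) pairs arising this way, with associated current proto-ranking; it is non-terminal if that proto-ranking is not total. Errors: let $R$ be a non-total proto-ranking and $x\succ y$ alternatives unranked by $R$. Offering $\{x,y\}$ misses an opportunity at $R$ if there is $z$ with $x\succ z\succ y$ and neither $yRz$ nor $zRx$. Offering $\{x,y\}$ takes a risk at $R$ if there is $z$ with either (a) $z\succ y$, $xRz$ and not $yRz$, or (b) $x\succ z$, $zRy$ and not $zRx$. The chair has missed an opportunity or taken a risk at a history if some pair offered along it did so at the proto-ranking in force when it was offered. *)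

(* Defs.v *)
From mathcomp Require Import all_boot.
Set Implicit Arguments. Unset Strict Implicit. Unset Printing Implicit Defensive.

Section Defs.
Variable X : finType.

Definition irreflexive_rel (R : rel X) : Prop := forall x, ~~ R x x.
Definition transitive_rel (R : rel X) : Prop :=
  forall x y z, R x y -> R y z -> R x z.
Definition total_rel (R : rel X) : Prop :=
  forall x y, x != y -> R x y || R y x.
Definition asymmetric_rel (R : rel X) : Prop := forall x y, R x y -> ~~ R y x.

Definition proto_ranking (R : rel X) : Prop :=
  irreflexive_rel R /\ transitive_rel R.
Definition ranking (R : rel X) : Prop := proto_ranking R /\ total_rel R.

Definition unranked (R : rel X) (x y : X) : bool :=
  [&& x != y, ~~ R x y & ~~ R y x].

Definition tclosure (R : rel X) : rel X :=
  fun x y => [exists z, R x z && connect R z y].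

(* R_t = transitive closure of R_{t-1} U {(winner, loser)} *)
Definition step (R : rel X) (p : X * X) : rel X :=
  tclosure (fun a b => R a b || ((a, b) == p)).

Definition empty_rel : rel X := fun _ _ => false.

Definition after (R : rel X) (h : seq (X * X)) : rel X := foldl step R h.

Fixpoint legal_from (R : rel X) (h : seq (X * X)) : Prop :=
  match h with
  | [::] => True
  | p :: h' => unranked R p.1 p.2 /\ legal_from (step R p) h'
  end.

Definition history (h : seq (X * X)) : Prop := legal_from empty_rel h.
Definition current (h : seq (X * X)) : rel X := after empty_rel h.

(* Errors, for the chair's preference P, with x P y *)
Definition misses_opp_oriented (P R : rel X) (x y : X) : bool :=
  [exists z, [&& P x z, P z y, ~~ R y z & ~~ R z x]].
Definition takes_risk_oriented (P R : rel X) (x y : X) : bool :=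
  [exists z, [&& P z y, R x z & ~~ R y z] || [&& P x z, R z y & ~~ R z x]].

Definition misses_opp (P R : rel X) (a b : X) : bool :=
  if P a b then misses_opp_oriented P R a b else misses_opp_oriented P R b a.
Definition takes_risk (P R : rel X) (a b : X) : bool :=
  if P a b then takes_risk_oriented P R a b else takes_risk_oriented P R b a.

Definition bad_offer (P R : rel X) (a b : X) : bool :=
  misses_opp P R a b || takes_risk P R a b.

Fixpoint no_error_from (P R : rel X) (h : seq (X * X)) : Prop :=
  match h with
  | [::] => True
  | p :: h' => ~~ bad_offer P R p.1 p.2 /\ no_error_from P (step R p) h'
  end.

Definition no_error (P : rel X) (h : seq (X * X)) : Prop :=
  no_error_from P empty_rel h.

End Defs.

(* Main.v *)
Require Import Defs.
From mathcomp Require Import all_boot.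
Set Implicit Arguments. Unset Strict Implicit. Unset Printing Implicit Defensive.

Section Aux.
Variable X : finType.

Definition sc (R : rel X) (a b : X) : rel X :=
  fun u v => R u v || (((u == a) || R u a) && ((v == b) || R b v)).

Lemma step_char (R : rel X) a b : transitive_rel R ->
  forall u v, step R (a, b) u v = sc R a b u v.
Proof.
move=> trR u v; rewrite /step /tclosure /sc.
pose E := (fun a' b' : X => R a' b' || ((a', b') == (a, b))).
change ([exists z, E u z && connect E z v] = sc R a b u v).
rewrite /sc.
apply/idP/idP.
- case/existsP=> z /andP[Euz /connectP[p pth ->]].
  have H0 : sc R a b u z.
    move: Euz; rewrite /E /sc; case/orP=> [->//|/eqP[-> ->]].
    by apply/orP; right; rewrite !eqxx.
  clear Euz; elim: p z pth H0 => [|z' p IH] z //= /andP[Ezz' pth] Huz.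
  apply: IH pth _.
  move: Huz Ezz'; rewrite /sc /E.
  case/orP=> [Ruz|/andP[Ua Db]].
    case/orP=> [Rzz'|/eqP[ez ez']]; first by rewrite (trR _ _ _ Ruz Rzz').
    by apply/orP; right; rewrite -ez Ruz orbT ez' eqxx.
  case/orP=> [Rzz'|/eqP[ez ez']].
    apply/orP; right; rewrite Ua /=.
    case/orP: Db => [/eqP <-|Rbz]; first by rewrite Rzz' orbT.
    by rewrite (trR _ _ _ Rbz Rzz') orbT.
  by apply/orP; right; rewrite Ua ez' eqxx.
- case/orP=> [Ruv|/andP[Ua Db]].
    apply/existsP; exists v; rewrite /E Ruv /=; exact: connect0.
  have Cbv : connect E b v.
    case/orP: Db => [/eqP->|Rbv]; first exact: connect0.
    by apply: connect1; rewrite /E Rbv.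
  have Eab : E a b by rewrite /E eqxx orbT.
  case/orP: Ua => [/eqP->|Rua].
    by apply/existsP; exists b; rewrite Eab.
  apply/existsP; exists a; rewrite /E Rua /=.
  by apply: connect_trans (connect1 Eab) Cbv.
Qed.


Lemma sc_proto (R : rel X) a b : proto_ranking R -> unranked R a b ->
  proto_ranking (sc R a b).
Proof.
case=> irR trR /and3P[nab nRab nRba]; split.
- move=> u; rewrite /sc (negbTE (irR u)) /=; apply/negP=> /andP[Ua Db].
  case/orP: Ua => [/eqP eua|Rua]; case/orP: Db => [/eqP eub|Rbu].
  + by rewrite -eua -eub eqxx in nab.
  + by rewrite -eua Rbu in nRba.
  + by rewrite -eub Rua in nRba.
  + by rewrite (trR _ _ _ Rbu Rua) in nRba.
- move=> u v w; rewrite /sc.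
  case/orP=> [Ruv|/andP[Ua Db]]; case/orP=> [Rvw|/andP[Ua' Db']].
  + by rewrite (trR _ _ _ Ruv Rvw).
  + apply/orP; right; rewrite Db' andbT.
    case/orP: Ua' => [/eqP eva|Rva]; first by rewrite -eva Ruv orbT.
    by rewrite (trR _ _ _ Ruv Rva) orbT.
  + apply/orP; right; rewrite Ua /=.
    case/orP: Db => [/eqP evb|Rbv]; first by rewrite -evb Rvw orbT.
    by rewrite (trR _ _ _ Rbv Rvw) orbT.
  + by rewrite Ua Db' orbT.
Qed.

Variable P : rel X.
Hypothesis irP : irreflexive_rel P.
Hypothesis trP : transitive_rel P.
Hypothesis toP : total_rel P.

Lemma asymP a b : P a b -> P b a -> False.
Proof. by move=> H1 H2; move: (irP a); rewrite (trP H1 H2). Qed.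

Lemma triP a b : [\/ a = b, P a b | P b a].
Proof.
case: (eqVneq a b) => [->|nab]; first by apply: Or31.
by case/orP: (toP nab) => H; [apply: Or32|apply: Or33].
Qed.

Definition Kinv (R : rel X) := forall a b w,
  R a b -> P b a -> P b w -> P w a -> R w b || R a w.

Lemma good_of (R : rel X) x y : P x y -> ~~ bad_offer P R x y ->
  [/\ forall z, P x z -> P z y -> R z x || R y z,
      forall z, P z y -> R x z -> R y z &
      forall z, P x z -> R z y -> R z x].
Proof.
move=> Pxy; rewrite /bad_offer /misses_opp /takes_risk Pxy negb_or.
case/andP=> /existsPn M /existsPn T; split.
- move=> z Pxz Pzy; move: (M z); rewrite Pxz Pzy /=.
  by rewrite negb_and !negbK orbC.
- move=> z Pzy Rxz; move: (T z); rewrite negb_or Pzy Rxz /=.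
  by case/andP=> /negbNE.
- move=> z Pxz Rzy; move: (T z); rewrite negb_or Pxz Rzy /=.
  by case/andP=> _ /negbNE.
Qed.

Lemma good_to (R : rel X) x y : P x y ->
  (forall z, P x z -> P z y -> R z x || R y z) ->
  (forall z, P z y -> R x z -> R y z) ->
  (forall z, P x z -> R z y -> R z x) ->
  ~~ bad_offer P R x y.
Proof.
move=> Pxy G1 G2 G3; rewrite /bad_offer /misses_opp /takes_risk Pxy negb_or.
apply/andP; split; apply/existsPn => z.
- apply/negP=> /and4P[Pxz Pzy nRyz nRzx].
  by case/orP: (G1 z Pxz Pzy) => H; [rewrite H in nRzx|rewrite H in nRyz].
- apply/negP; case/orP=> /and3P[H1 H2 H3].
  + by rewrite (G2 z H1 H2) in H3.
  + by rewrite (G3 z H1 H2) in H3.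
Qed.


Lemma Kinv_yx (R : rel X) x y : proto_ranking R -> Kinv R -> unranked R x y ->
  P x y ->
  (forall z, P x z -> P z y -> R z x || R y z) ->
  (forall z, P z y -> R x z -> R y z) ->
  (forall z, P x z -> R z y -> R z x) ->
  Kinv (sc R y x).
Proof.
case=> irR trR KR /and3P[nxy nRxy nRyx] Pxy G1 G2 G3 c d w.
rewrite /sc => Scd Pdc Pdw Pwc.
case Rcd: (R c d).
  by case/orP: (KR c d w Rcd Pdc Pdw Pwc) => ->; rewrite ?orbT.
move: Scd; rewrite Rcd /= => /andP[Uc Dd].
have dx : d = x.
  case/orP: Dd => [/eqP//|Rxd]; exfalso.
  case: (triP d y) => [edy|Pdy|Pyd].
  - by rewrite -edy Rxd in nRxy.
  - have Ryd := G2 d Pdy Rxd.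
    case/orP: Uc => [/eqP ecy|Rcy]; first by rewrite ecy Ryd in Rcd.
    by rewrite (trR _ _ _ Rcy Ryd) in Rcd.
  - have Pyc := trP Pyd Pdc.
    case/orP: Uc => [/eqP ecy|Rcy]; first by move: (irP y); rewrite -{2}ecy Pyc.
    case: (triP x c) => [exc|Pxc|Pcx].
    + by rewrite exc Rcy in nRxy.
    + by rewrite (trR _ _ _ (G3 c Pxc Rcy) Rxd) in Rcd.
    + exact: (asymP (trP Pyc Pcx) Pxy).
subst d.
have cy : c = y.
  case/orP: Uc => [/eqP//|Rcy].
  by rewrite (G3 c Pdc Rcy) in Rcd.
subst c.
by case/orP: (G1 w Pdw Pwc) => ->; rewrite ?orbT.
Qed.

Lemma Kinv_xy (R : rel X) x y : proto_ranking R -> Kinv R -> unranked R x y ->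
  P x y ->
  (forall z, P x z -> P z y -> R z x || R y z) ->
  Kinv (sc R x y).
Proof.
case=> irR trR KR /and3P[nxy nRxy nRyx] Pxy G1 c d w.
rewrite /sc => Scd Pdc Pdw Pwc.
case Rcd: (R c d).
  by case/orP: (KR c d w Rcd Pdc Pdw Pwc) => ->; rewrite ?orbT.
move: Scd; rewrite Rcd /= => /andP[Uc Dd].
have Lw : (w == x) || R w x -> (R w d || ((w == x) || R w x) && ((d == y) || R y d)) || (R c w || ((c == x) || R c x) && ((w == y) || R y w)).
  by move=> ->; rewrite Dd orbT.
have Rw : (w == y) || R y w -> (R w d || ((w == x) || R w x) && ((d == y) || R y d)) || (R c w || ((c == x) || R c x) && ((w == y) || R y w)).
  by move=> ->; rewrite Uc !orbT.
case: (triP w x) => [ewx|Pwx|Pxw].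
- by apply: Lw; rewrite ewx eqxx.
- have Pdy := trP (trP Pdw Pwx) Pxy.
  have Ryd : R y d.
    case/orP: Dd => [/eqP edy|//]; by move: (irP y); rewrite -{1}edy Pdy.
  case/orP: (KR y d w Ryd Pdy Pdw (trP Pwx Pxy)) => H.
  + by rewrite H.
  + by apply: Rw; rewrite H orbT.
- case: (triP w y) => [ewy|Pwy|Pyw].
  + by apply: Rw; rewrite ewy eqxx.
  + by case/orP: (G1 w Pxw Pwy) => H; [apply: Lw|apply: Rw]; rewrite H orbT.
  + have Pxc := trP Pxy (trP Pyw Pwc).
    have Rcx : R c x.
      case/orP: Uc => [/eqP ecx|//]; by move: (irP x); rewrite -{2}ecx Pxc.
    case/orP: (KR c x w Rcx Pxc (trP Pxy Pyw) Pwc) => H.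
    * by apply: Lw; rewrite H orbT.
    * by rewrite H !orbT.
Qed.


Lemma card_lt (A B : pred X) w0 : (forall w, A w -> B w) -> B w0 -> ~~ A w0 ->
  #|A| < #|B|.
Proof.
move=> sAB Bw nAw; apply: proper_card; apply/properP; split.
  by apply/subsetP => w; rewrite !unfold_in; apply: sAB.
by exists w0; rewrite unfold_in.
Qed.

Definition meas (p : X * X) := #|[pred w | P p.1 w && P w p.2]|.
Definition rank (a : X) := #|[pred u | P u a]|.

Lemma meas_lt x y x' y' w0 :
  (forall w, P x w -> P w y -> P x' w && P w y') -> P x' w0 -> P w0 y' ->
  ~~ (P x w0 && P w0 y) -> meas (x, y) < meas (x', y').
Proof.
move=> H H1 H2 H3; apply: (@card_lt _ _ w0) => //=.
- by move=> w /andP[]; apply: H.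
- by rewrite H1 H2.
Qed.

Lemma rank_lt a b : P a b -> rank a < rank b.
Proof.
move=> Pab; apply: (@card_lt _ _ a) => /=.
- by move=> w Pwa; apply: trP Pwa Pab.
- exact: Pab.
- exact: irP.
Qed.

Lemma unranked_sym (R : rel X) a b : unranked R a b = unranked R b a.
Proof. by rewrite /unranked eq_sym; congr (_ && _); rewrite andbC. Qed.

Lemma exists_good (R : rel X) : proto_ranking R -> Kinv R -> ~ total_rel R ->
  exists x y, unranked R x y /\ ~~ bad_offer P R x y.
Proof.
case=> irR trR KR ntot.
have [x0 [y0 [P0 U0]]] : exists x y, P x y /\ unranked R x y.
  case: (boolP [exists x, exists y, unranked R x y]).
    case/existsP=> x /existsP[y U]; case/and3P: (U) => nxy _ _.
    case/orP: (toP nxy) => Pxy; first by exists x, y.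
    by exists y, x; rewrite unranked_sym.
  move/existsPn=> H; exfalso; apply: ntot => x y nxy.
  move: (H x) => /existsPn /(_ y).
  by rewrite /unranked nxy /= negb_and !negbK.
pose Cu := fun p : X * X => P p.1 p.2 && unranked R p.1 p.2.
pose G1b := fun p : X * X =>
  [forall w, (P p.1 w && P w p.2) ==> (R w p.1 || R p.2 w)].
have [p1 Cp1] : exists p, Cu p && G1b p.
  have C0 : Cu (x0, y0) by rewrite /Cu /= P0 U0.
  case: (arg_minnP meas C0) => [[x y]] /andP[/= Pxy Uxy] Hmin.
  exists (x, y); rewrite /Cu /G1b /= Pxy Uxy /=.
  apply/forallP => w; apply/implyP => /andP[Pxw Pwy].
  case/and3P: (Uxy) => nxy nRxy nRyx.
  apply/negPn/negP => /norP[nRwx nRyw].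
  case Rxw: (R x w).
  - have Cw : Cu (w, y).
      rewrite /Cu /unranked /= Pwy nRyw andbT /=.
      apply/andP; split.
        by apply/eqP => ewy; move: (irP y); rewrite -{1}ewy Pwy.
      by apply/negP => Rwy; rewrite (trR _ _ _ Rxw Rwy) in nRxy.
    move: (Hmin _ Cw); apply/negP; rewrite -ltnNge.
    apply: (@meas_lt _ _ _ _ w) => //.
    + by move=> v Pwv Pvy; rewrite (trP Pxw Pwv) Pvy.
    + by rewrite (negbTE (irP w)).
  - have Cw : Cu (x, w).
      rewrite /Cu /unranked /= Pxw Rxw nRwx /= andbT.
      by apply/eqP => exw; move: (irP x); rewrite {2}exw Pxw.
    move: (Hmin _ Cw); apply/negP; rewrite -ltnNge.
    apply: (@meas_lt _ _ _ _ w) => //.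
    + by move=> v Pxv Pvw; rewrite Pxv (trP Pvw Pwy).
    + by rewrite (negbTE (irP w)) andbF.
case: (@arg_maxnP _ p1 (fun p => Cu p && G1b p) meas Cp1) => [[x y]] /andP[/andP[/= Pxy Uxy] G1xy] Hmax.
case/and3P: (Uxy) => nxy nRxy nRyx.
have G1 : forall z, P x z -> P z y -> R z x || R y z.
  by move=> z Pxz Pzy; move/forallP: G1xy => /(_ z) /implyP; apply; rewrite Pxz.
exists x, y; split => //.
apply: good_to => //.
- move=> z Pzy Rxz; apply/negPn/negP => nRyz; exfalso.
  pose W := fun v => [&& P v x, R x v & ~~ R y v].
  have Wz : W z.
    rewrite /W Rxz nRyz andbT.
    case: (triP x z) => [exz|Pxz|->//].
    + by move: (irR x); rewrite {2}exz Rxz.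
    + case/orP: (G1 z Pxz Pzy) => H.
      * by move: (irR x); rewrite (trR _ _ _ Rxz H).
      * by rewrite H in nRyz.
  case: (arg_maxnP rank Wz) => zm /and3P[Pzx Rxzm nRyzm] Hzm.
  have Czm : Cu (zm, y) && G1b (zm, y).
    rewrite /Cu /G1b /unranked /= (trP Pzx Pxy) nRyzm andbT /=.
    rewrite ?andbT -?andbA; apply/and3P; split.
    + by apply/eqP => ezy; apply: (asymP Pxy); rewrite -ezy.
    + by apply/negP => Rzy; rewrite (trR _ _ _ Rxzm Rzy) in nRxy.
    + apply/forallP => w; apply/implyP => /andP[Pzw Pwy].
      case: (triP w x) => [ewx|Pwx|Pxw].
      * by rewrite ewx Rxzm.
      * case/orP: (KR x zm w Rxzm Pzx Pzw Pwx) => [->//|Rxw].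
        case Ryw: (R y w); first by rewrite orbT.
        have Ww : W w by rewrite /W Pwx Rxw Ryw.
        move: (Hzm w Ww); rewrite /= leqNgt (rank_lt Pzw) //.
      * case/orP: (G1 w Pxw Pwy) => [Rwx|->]; last by rewrite orbT.
        by rewrite (trR _ _ _ Rwx Rxzm).
  move: (Hmax _ Czm); apply/negP; rewrite -ltnNge.
  apply: (@meas_lt _ _ _ _ x) => //.
  + by move=> v Pxv Pvy; rewrite (trP Pzx Pxv) Pvy.
  + by rewrite (negbTE (irP x)).
- move=> z Pxz Rzy; apply/negPn/negP => nRzx; exfalso.
  pose W := fun v => [&& P y v, R v y & ~~ R v x].
  have Wz : W z.
    rewrite /W Rzy nRzx andbT.
    case: (triP z y) => [ezy|Pzy|->//].
    + by move: (irR y); rewrite -{1}ezy Rzy.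
    + case/orP: (G1 z Pxz Pzy) => H.
      * by rewrite H in nRzx.
      * by move: (irR y); rewrite (trR _ _ _ H Rzy).
  case: (arg_minnP rank Wz) => zm /and3P[Pyz Rzmy nRzmx] Hzm.
  have Czm : Cu (x, zm) && G1b (x, zm).
    rewrite /Cu /G1b /unranked /= (trP Pxy Pyz) nRzmx /=.
    rewrite ?andbT -?andbA; apply/and3P; split.
    + by apply/eqP => exz; apply: (asymP Pxy); rewrite exz.
    + by apply/negP => Rxz; rewrite (trR _ _ _ Rxz Rzmy) in nRxy.
    + apply/forallP => w; apply/implyP => /andP[Pxw Pwz].
      case: (triP w y) => [ewy|Pwy|Pyw].
      * by rewrite ewy Rzmy orbT.
      * case/orP: (G1 w Pxw Pwy) => [->//|Ryw].
        by rewrite (trR _ _ _ Rzmy Ryw) orbT.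
      * case/orP: (KR zm y w Rzmy Pyz Pyw Pwz) => [Rwy|->]; last by rewrite orbT.
        case Rwx: (R w x) => //.
        have Ww : W w by rewrite /W Pyw Rwy Rwx.
        move: (Hzm w Ww); rewrite leqNgt (rank_lt Pwz) //.
  move: (Hmax _ Czm); apply/negP; rewrite -ltnNge.
  apply: (@meas_lt _ _ _ _ y) => //.
  + by move=> v Pxv Pvy; rewrite Pxv (trP Pvy Pyz).
  + by rewrite (negbTE (irP y)) andbF.
Qed.


Lemma Kinv_ext (R1 R2 : rel X) : (forall u v, R1 u v = R2 u v) -> Kinv R1 -> Kinv R2.
Proof. by move=> E K a b w; rewrite -!E; apply: K. Qed.

Lemma proto_ext (R1 R2 : rel X) : (forall u v, R1 u v = R2 u v) ->
  proto_ranking R1 -> proto_ranking R2.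
Proof.
move=> E [ir tr]; split; first by move=> u; rewrite -E.
by move=> u v w; rewrite -!E; apply: tr.
Qed.

Lemma inv_step (R : rel X) p : proto_ranking R -> Kinv R ->
  unranked R p.1 p.2 -> ~~ bad_offer P R p.1 p.2 ->
  proto_ranking (step R p) /\ Kinv (step R p).
Proof.
case: p => a b /= pr K U nb.
have E := step_char a b (proj2 pr).
split; first by apply: (proto_ext (fun u v => esym (E u v))); apply: sc_proto.
apply: (Kinv_ext (fun u v => esym (E u v))).
case Pab: (P a b).
  have [G1 G2 G3] := good_of Pab nb.
  exact: Kinv_xy pr K U Pab G1.
have Pba : P b a.
  case/and3P: (U) => nab _ _; by move: (toP nab); rewrite Pab.
have nb' : ~~ bad_offer P R b a.
  by move: nb; rewrite /bad_offer /misses_opp /takes_risk Pab Pba.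
have [G1 G2 G3] := good_of Pba nb'.
by apply: Kinv_yx pr K _ Pba G1 G2 G3; rewrite unranked_sym.
Qed.

Lemma inv_after h : forall R, proto_ranking R -> Kinv R -> legal_from R h ->
  no_error_from P R h -> proto_ranking (after R h) /\ Kinv (after R h).
Proof.
elim: h => [|p h IH] R pr K //= [U L] [nb N].
have [pr' K'] := inv_step pr K U nb.
exact: IH pr' K' L N.
Qed.

End Aux.

Theorem proposition2 (X : finType) (P : rel X) :
  ranking P ->
  forall h : seq (X * X),
    history h ->
    ~ total_rel (current h) ->
    no_error P h ->
    exists x y : X,
      unranked (current h) x y /\ ~~ bad_offer P (current h) x y.
Proof.
case=> [[irP trP] toP] h Hh Nt Ne.
have pr0 : proto_ranking (@empty_rel X) by split.
have K0 : Kinv P (@empty_rel X) by [].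
have [pr K] := inv_after irP trP toP pr0 K0 Hh Ne.
exact (exists_good irP trP toP pr K Nt).
Qed.
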